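(* Let $L_m$ be the quiver with one vertex and $m\ge0$ loops, and $d\geq0$. Then the set $\hat S(d)$ (for $Q=L_m$) is $$\hat S(d)=\begin{cases}\text{all subsets of }\{1,\ldots,d\},& m=0,\\ \{\emptyset,\{d\},\{d-1,d\},\ldots,\{2,\ldots,d\},\{1,\ldots,d\}\},& m=1,\\ \{\emptyset,\{1,\ldots,d\}\},& m\geq2.\end{cases}$$
   Context: For a quiver $Q$ with vertex set $Q_0$ and arrows $\alpha:i\to j$, and $\mathbf e\in\mathbb NQ_0$: for tuples $\mathbf K=(K_i)$ with $K_i\subset\{1,\dots,e_i\}$, $|\mathbf K|=(|K_i|)_i$; writing $K_i=\{k_{i,1}<\ldots<k_{i,|K_i|}\}$ and for $\mathbf L$ with $L_i\subset\{1,\dots,|K_i|\}$, $\mathrm{ht}(\mathbf K,\mathbf L)=\sum_i\sum_{j\in L_i}(k_{i,j}-j)$. The sets $\hat S(\mathbf e)$ are defined recursively: $\mathbf K$ (with $K_i\subset\{1,\dots,e_i\}$) belongs to $\hat S(\mathbf e)$ iff $\mathrm{ht}(\mathbf K,\mathbf L)\geq\sum_{\alpha:i\to j}|L_i|(e_j-|K_j|)$ for all $\mathbf L\in\hat S(|\mathbf K|)$. For $L_m$ (one vertex, $m$ loops) this reads: $K=\{k_1<\dots<k_{|K|}\}\subset\{1,\dots,d\}$ lies in $\hat S(d)$ iff $\sum_{j\in L}(k_j-j)\geq m|L|(d-|K|)$ for all $L\in\hat S(|K|)$. *)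

(* Defs.v *)
From mathcomp Require Import all_boot.
Unset Strict Implicit. Unset Printing Implicit Defensive.

(* Subsets K of {1,...,d} are encoded as K : {set 'I_d}, the element
   i : 'I_d standing for the integer i+1.  The increasing enumeration
   k_1 < ... < k_|K| of K is [seq i.+1 | i <- enum K] (enum 'I_d is increasing),
   so k_{j+1} = nth 0 (kseq d K) j. *)
Definition kseq (d : nat) (K : {set 'I_d}) : seq nat :=
  [seq (val i).+1 | i <- enum K].

(* ht(K,L) = sum_{j in L} (k_j - j), for L a subset of {1,...,|K|}
   (again j : 'I_#|K| stands for j+1).  Since k_j >= j the natural-number
   subtraction never truncates. *)
Definition ht (d : nat) (K : {set 'I_d}) (L : {set 'I_#|K|}) : nat :=
  \sum_(j in L) (nth 0 (kseq d K) j - (val j).+1).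

Fixpoint Shat_fuel (n m d : nat) (K : {set 'I_d}) : bool :=
  match n with
  | 0 => true
  | n'.+1 =>
      [forall L : {set 'I_#|K|},
         Shat_fuel n' m #|K| L ==> (m * #|L| * (d - #|K|) <= ht d K L)]
  end.

(* With fuel d.+1 this computes the genuine recursive definition: every recursive
   call either goes to a strictly smaller |K| < d, or has K = {1..d}, where the
   condition holds trivially (ht = 0 and d - |K| = 0). *)
Definition Shat (m d : nat) (K : {set 'I_d}) : bool := Shat_fuel d.+1 m d K.

(* Main.v *)
Require Import Defs.
From mathcomp Require Import all_boot.
From mathcomp Require Import zify.
Lemma sorted_bounds (s : seq nat) (b : nat) : sorted ltn s -> all (fun x => x < b) s ->
  forall a, all (fun x => a <= x) s ->
  forall j, j < size s -> a + j <= nth 0 s j /\ nth 0 s j + (size s - j) <= b.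
Proof.
elim: s => [|x r IH] //= Hs /andP [Hxb Hrb] a /andP [Hax Har] j Hj.
have Hp := order_path_min ltn_trans Hs.
have Hr : sorted ltn r by exact: path_sorted Hs.
have IH' := IH Hr Hrb x.+1 Hp.
case: j Hj => [|j] Hj /=; last first.
  have [] := IH' j Hj. lia.
  clear Hj; case: r {Hs Hrb Har Hp Hr IH} IH' => [|y r] IH' /=; first by lia.
  have [] := IH' 0 isT. simpl. lia.

Qed.

Lemma sortedK d (K : {set 'I_d}) : sorted ltn (map val (enum K)).
Proof.
apply: (subseq_sorted ltn_trans _ (iota_ltn_sorted 0 d)).
rewrite -val_enum_ord; apply: map_subseq.
rewrite enumT -deprecated_filter_index_enum; exact: filter_subseq.
Qed.

Lemma sizeK d (K : {set 'I_d}) : size (map val (enum K)) = #|K|.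
Proof. by rewrite size_map cardE. Qed.

Lemma nthK d (K : {set 'I_d}) j : j < #|K| ->
  nth 0 (kseq d K) j = (nth 0 (map val (enum K)) j).+1.
Proof.
move=> Hj; rewrite /kseq.
have Hj' : j < size (enum K) by rewrite -cardE.
rewrite (nth_map (enum_default (Ordinal (leq_ltn_trans (leq0n _) (leq_trans Hj (max_card _)))))) //.
by rewrite (nth_map (enum_default (Ordinal (leq_ltn_trans (leq0n _) (leq_trans Hj (max_card _)))))).
Qed.

Lemma term_bounds d (K : {set 'I_d}) (t : nat) (j : 'I_#|K|) :
  (forall i, i \in K -> t <= val i) ->
  t <= nth 0 (kseq d K) j - (val j).+1 <= d - #|K|.
Proof.
move=> Ht; rewrite nthK //.
have Hb : all (fun x => x < d) (map val (enum K)).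
  by apply/allP => x /mapP [i _ ->]; exact: ltn_ord.
have Ha : all (fun x => t <= x) (map val (enum K)).
  by apply/allP => x /mapP [i Hi ->]; apply: Ht; rewrite -mem_enum.
have Hj : j < size (map val (enum K)) by rewrite sizeK.
have [] := @sorted_bounds _ _ (sortedK _ K) Hb _ Ha _ Hj.
rewrite sizeK => H1 H2; apply/andP; split;
  have := ltn_ord j; move: H1 H2; change (\val j) with (nat_of_ord j);
  move: (nth _ _ _) => e; lia.
Qed.

Lemma card_suffix d t : #|[set i : 'I_d | t <= i]| = d - t.
Proof.
rewrite -sum1dep_card -(big_mkord (fun i => t <= i) (fun _ => 1)).
elim: d => [|d IH]; first by rewrite big_geq.
rewrite big_mkcond big_nat_recr //= -big_mkcond IH; case: leqP; lia.
Qed.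

Definition charS (m d : nat) (K : {set 'I_d}) : bool :=
  match m with
  | 0 => true
  | 1 => [exists t : 'I_d.+1, K == [set i : 'I_d | t <= i]]
  | _ => (K == set0) || (K == setT)
  end.

Lemma ht_le d (K : {set 'I_d}) (L : {set 'I_#|K|}) : ht d K L <= #|L| * (d - #|K|).
Proof.
rewrite /ht -sum_nat_const; apply: leq_sum => j _.
by have /andP [] := @term_bounds d K 0 j (fun _ _ => leq0n _).
Qed.

Lemma ht_ge d (K : {set 'I_d}) (L : {set 'I_#|K|}) t : (forall i, i \in K -> t <= val i) ->
  #|L| * t <= ht d K L.
Proof.
move=> Ht; rewrite /ht -sum_nat_const; apply: leq_sum => j _.
by have /andP [] := @term_bounds d K t j Ht.
Qed.

Lemma head_min d (K : {set 'I_d}) i : i \in K ->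
  nth 0 (map val (enum K)) 0 <= val i.
Proof.
move=> Hi.
have : val i \in map val (enum K) by apply: map_f; rewrite mem_enum.
have := sortedK d K.
case: (map val (enum K)) => [|x r] //= Hs.
have Hp := order_path_min ltn_trans Hs.
rewrite inE => /orP [/eqP -> //| Hr].
by apply: ltnW; move/allP: Hp; apply.
Qed.

Lemma main_step m d (K : {set 'I_d}) : #|K| < d ->
  [forall L : {set 'I_#|K|}, charS m #|K| L ==> (m * #|L| * (d - #|K|) <= ht d K L)]
  = charS m d K.
Proof.
move=> hk; case: m => [|[|n]] /=.
- by apply/forallP => L; rewrite mul0n.
- apply/idP/idP.
  + move=> H.
    have HT : charS 1 #|K| [set: 'I_#|K|].
      by apply/existsP; exists ord0; apply/eqP/setP => i; rewrite !inE.
    have {}H := implyP (forallP H setT) HT.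
    rewrite cardsT card_ord mul1n in H.
    case Hk0 : (#|K| == 0).
      apply/existsP; exists ord_max; apply/eqP/setP => i.
      move: Hk0; rewrite cards_eq0 => /eqP ->.
      by rewrite !inE /= leqNgt ltn_ord.
    have k0 : 0 < #|K| by rewrite lt0n Hk0.
    pose f := fun j : 'I_#|K| => nth 0 (kseq d K) j - (val j).+1.
    have Hle := @leqif_sum _ (fun j => j \in [set: 'I_#|K|]) (fun j => f j == d - #|K|)
       f (fun _ => d - #|K|)
       (fun j _ => leqif_eq (proj2 (andP (@term_bounds d K 0 j (fun _ _ => leq0n _))))).
    have Heq : ht d K setT == \sum_(j in [set: 'I_#|K|]) (d - #|K|).
      rewrite sum_nat_const cardsT card_ord eqn_leq H andbT.
      by have := ht_le _ K setT; rewrite cardsT card_ord.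
    move: Heq; change (ht d K setT) with (\sum_(i in [set: 'I_#|K|]) f i); rewrite Hle.2 => /forallP /(_ (Ordinal k0)).
    rewrite inE /= /f nthK // => /eqP Hx.
    apply/existsP; exists (inord (d - #|K|)); rewrite eqEcard; apply/andP; split.
      apply/subsetP => i Hi; rewrite inE inordK; last by lia.
      have := head_min _ _ _ Hi; move: Hx => /=; change (\val i) with (nat_of_ord i); lia.
    have := card_suffix d (@inord d (d - #|K|)); move=> ->; rewrite inordK; lia.
  + case/existsP => t /eqP HK.
    have Ht : forall i, i \in K -> t <= val i by move=> i; rewrite HK inE.
    have Hc : #|K| = d - t by rewrite HK card_suffix.
    apply/forallP => L; apply/implyP => _; rewrite mul1n.
    have := ht_ge _ _ L _ Ht; have := ltn_ord t; move: (ht d K L) (#|L|) => h l; rewrite Hc; nia.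
- apply/idP/idP.
  + move=> H.
    have HT : charS n.+2 #|K| [set: 'I_#|K|] by rewrite /= eqxx orbT.
    have {}H := implyP (forallP H setT) HT.
    have := ht_le _ K setT; rewrite cardsT card_ord in H *.
    move=> H2.
    have : #|K| * (d - #|K|) == 0.
      rewrite -leqn0; move: H H2; rewrite -mulnA.
      move: (ht _ _ _) => h; move: (#|K| * (d - #|K|)) => x; nia.
    by rewrite muln_eq0 subn_eq0 leqNgt hk orbF cards_eq0 => ->.
  + case/orP => [/eqP HK | /eqP HK]; last by rewrite HK cardsT card_ord ltnn in hk.
    apply/forallP => L; apply/implyP => _.
    have : #|L| <= #|K| by have := max_card L; rewrite card_ord.
    have hK0 : #|K| = 0 by rewrite HK cards0.
    move=> HL; have -> : #|L| = 0 by lia.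
    by rewrite muln0 mul0n.
Qed.

Lemma fuel m n : forall d (K : {set 'I_d}), d < n -> Shat_fuel n m d K = charS m d K.
Proof.
elim: n => [|n IH] d K hd //.
rewrite /=; case: (ltnP #|K| d) => hk.
  rewrite -(main_step m d K hk); apply: eq_forallb => L; rewrite IH //.
  exact: leq_trans hk hd.
have hK : #|K| = d by have := max_card K; rewrite card_ord; lia.
transitivity true.
  apply/forallP => L; apply/implyP => _.
  have -> : d - #|K| = 0 by lia.
  by rewrite muln0.
have -> : K = setT.
  apply/eqP.
  by rewrite eqEcard subsetT cardsT card_ord hk.
clear IH.
case: m => [|[|m]] //=; last by rewrite eqxx orbT.
by apply/esym/existsP; exists ord0; apply/eqP/setP => i; rewrite !inE.
Qed.

Theorem mainTheorem10 (m d : nat) (K : {set 'I_d}) :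
  Shat m d K =
  match m with
  | 0 => true
  | 1 => [exists t : 'I_d.+1, K == [set i : 'I_d | t <= i]]
  | _ => (K == set0) || (K == setT)
  end.
Proof. exact: fuel. Qed.
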